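(* Consider the two-dimensional control system $$\dot x_1=\theta_1x_1^3+\theta_2x_1^2+\theta_3x_2,\qquad \dot x_2=\theta_4x_2^3+\theta_5x_2^2+\theta_6x_1,$$ with control $\theta\in\mathbb R^6$. For every positive integer $N$ and every data $(x_i,y_i)_{i=1}^N$ in $\mathbb R^2\times\mathbb R^2$ such that $x_1,\dots,x_N$ are pairwise distinct and non-zero and $y_1,\dots,y_N$ are pairwise distinct and non-zero, there is a flow map $\varphi$ of the system (a finite composition of flows with piecewise constant controls) with $\varphi(x_i)=y_i$ for all $i$.
   Context: For a vector field $g$ obtained by fixing $\theta$, $\varphi^g_t$ is the time-$t$ flow of $\dot x=g(x)$; flow maps of the system are compositions $\varphi^{g_k}_{t_k}\circ\cdots\circ\varphi^{g_1}_{t_1}$ with $t_i\ge0$, each defined (for these locally Lipschitz fields) on the relevant points for the times used. *)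

(* Defs.v *)
From Stdlib Require Import Reals List.
From Coquelicot Require Import Coquelicot.
Open Scope R_scope.

Record control := mkControl
  { th1 : R; th2 : R; th3 : R; th4 : R; th5 : R; th6 : R }.

Definition field1 (th : control) (x1 x2 : R) : R :=
  th1 th * x1 ^ 3 + th2 th * x1 ^ 2 + th3 th * x2.
Definition field2 (th : control) (x1 x2 : R) : R :=
  th4 th * x2 ^ 3 + th5 th * x2 ^ 2 + th6 th * x1.

(* flow_step th t p q : the time-t flow of x' = g_theta(x) is defined at p
   (on [0,t]) and sends p to q, i.e. there is a solution curve
   (gamma1, gamma2) on [0,t] starting at p and ending at q.
   (By local Lipschitz continuity solutions are unique, so this relation is
   the graph of the flow map phi^{g_theta}_t.) *)
Definition flow_step (th : control) (t : R) (p q : R * R) : Prop :=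
  exists g1 g2 : R -> R,
    g1 0 = fst p /\ g2 0 = snd p /\ g1 t = fst q /\ g2 t = snd q /\
    forall s, 0 <= s <= t ->
      is_derive g1 s (field1 th (g1 s) (g2 s)) /\
      is_derive g2 s (field2 th (g1 s) (g2 s)).

Fixpoint flow_comp (steps : list (control * R)) (p q : R * R) : Prop :=
  match steps with
  | nil => p = q
  | (th, t) :: rest => exists z, flow_step th t p z /\ flow_comp rest z q
  end.

(* Main.v *)
Require Import Defs.
From Stdlib Require Import Reals List Lra Lia.
From Coquelicot Require Import Coquelicot.
Open Scope R_scope.

Definition csh1 (a : R) := mkControl 0 0 a 0 0 0.
Definition csq2 (d : R) := mkControl 0 0 0 0 d 0.

Lemma step_sh1 a p : flow_step (csh1 a) 1 p (fst p + a * snd p, snd p).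
Proof.
  exists (fun s => fst p + a * s * snd p), (fun _ => snd p).
  simpl. split; [ring|]. split; [reflexivity|]. split; [ring|]. split; [reflexivity|].
  intros s _. unfold field1, field2; simpl. split.
  - auto_derive; auto. ring.
  - auto_derive; auto. ring.
Qed.

Lemma step_sq2 d p : d * snd p < 1 ->
  flow_step (csq2 d) 1 p (fst p, snd p / (1 - d * snd p)).
Proof.
  intros H. destruct p as [x1 u]; simpl in *.
  exists (fun _ => x1), (fun s => u / (1 - d * s * u)).
  simpl. split; [reflexivity|]. split.
  { replace (d*0*u) with 0 by ring. unfold Rdiv. rewrite Rminus_0_r, Rinv_1. ring. }
  split; [reflexivity|]. split.
  { f_equal; ring. }
  intros s Hs. assert (Hne : 1 - d * s * u <> 0).
  { destruct (Rle_lt_dec (d*u) 0); nra. }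
  unfold field1, field2; simpl. split.
  - auto_derive; auto. ring.
  - auto_derive.
    + lra.
    + field. lra.
Qed.

Definition swp (p : R * R) : R * R := (snd p, fst p).
Definition swc (th : control) :=
  mkControl (th4 th) (th5 th) (th6 th) (th1 th) (th2 th) (th3 th).
Definition swst (st : control * R) := (swc (fst st), snd st).

Lemma flow_step_swap th t p q :
  flow_step th t p q -> flow_step (swc th) t (swp p) (swp q).
Proof.
  intros (g1 & g2 & H1 & H2 & H3 & H4 & H5).
  exists g2, g1. simpl. do 4 (split; [auto|]).
  intros s Hs. destruct (H5 s Hs) as [A B]. split; [exact B|exact A].
Qed.

Lemma flow_comp_swap steps p q :
  flow_comp steps p q -> flow_comp (map swst steps) (swp p) (swp q).
Proof.
  revert p. induction steps as [|[th t] rest IH]; intros p H; simpl in *.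
  - subst; reflexivity.
  - destruct H as (z & Hz & Hr). exists (swp z). split.
    + apply flow_step_swap; auto.
    + apply IH; auto.
Qed.

Lemma flow_comp_app s1 s2 p q r :
  flow_comp s1 p q -> flow_comp s2 q r -> flow_comp (s1 ++ s2) p r.
Proof.
  revert p. induction s1 as [|[th t] rest IH]; intros p H1 H2; simpl in *.
  - subst; auto.
  - destruct H1 as (z & Hz & Hr). exists z. split; [exact Hz|]. eapply IH; eauto.
Qed.

Definition Reach (N : nat) (x y : nat -> R * R) : Prop :=
  exists steps : list (control * R),
    List.Forall (fun st => 0 <= snd st) steps /\
    forall i, (i < N)%nat -> flow_comp steps (x i) (y i).

Lemma Reach_refl N x : Reach N x x.
Proof. exists nil. split; auto. intros; reflexivity. Qed.

Lemma Reach_trans N x y z : Reach N x y -> Reach N y z -> Reach N x z.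
Proof.
  intros (s1 & F1 & H1) (s2 & F2 & H2). exists (s1 ++ s2). split.
  - apply Forall_app; auto.
  - intros i Hi. eapply flow_comp_app; eauto.
Qed.

Lemma Reach_ext N x y x' y' :
  (forall i, (i < N)%nat -> x i = x' i) -> (forall i, (i < N)%nat -> y i = y' i) ->
  Reach N x y -> Reach N x' y'.
Proof.
  intros Ex Ey (s & F & H). exists s. split; auto.
  intros i Hi. rewrite <- Ex, <- Ey by auto. auto.
Qed.

Lemma Reach_swap N x y : Reach N x y ->
  Reach N (fun i => swp (x i)) (fun i => swp (y i)).
Proof.
  intros (s & F & H). exists (map swst s). split.
  - apply Forall_map. eapply Forall_impl; [|exact F]. intros [a b]; simpl; auto.
  - intros i Hi. apply flow_comp_swap; auto.
Qed.

Lemma shear1 N x a :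
  Reach N x (fun i => (fst (x i) + a * snd (x i), snd (x i))).
Proof.
  exists ((csh1 a, 1) :: nil). split.
  - constructor; simpl; [lra | constructor].
  - intros i Hi. simpl. eexists. split; [apply step_sh1|reflexivity].
Qed.

Lemma shear2 N x b :
  Reach N x (fun i => (fst (x i), snd (x i) + b * fst (x i))).
Proof.
  pose proof (Reach_swap _ _ _ (shear1 N (fun i => swp (x i)) b)) as H.
  eapply Reach_ext; [| |exact H]; intros i Hi; unfold swp; simpl; destruct (x i); reflexivity.
Qed.

Lemma term_shear N x a d :
  (forall i, (i < N)%nat -> d * snd (x i) < 1) ->
  Reach N x (fun i => (fst (x i) + a * (snd (x i) / (1 - d * snd (x i))), snd (x i))).
Proof.
  intros Hd.
  exists ((csq2 d, 1) :: (csh1 a, 1) :: (csq2 (-d), 1) :: nil). split.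
  - repeat constructor; simpl; lra.
  - intros i Hi. specialize (Hd i Hi). destruct (x i) as [x1 u]. simpl in *.
    eexists. split; [apply step_sq2; simpl; exact Hd|].
    eexists. split; [apply step_sh1|]. simpl.
    assert (Hpos : 0 < 1 - d * u) by lra.
    assert (Hc : - d * (u / (1 - d * u)) < 1).
    { replace (- d * (u / (1 - d * u))) with (1 - 1 / (1 - d*u)) by (field; lra).
      assert (0 < 1 / (1 - d*u)) by (apply Rdiv_lt_0_compat; lra). lra. }
    eexists. split; [apply step_sq2; simpl; exact Hc|]. simpl.
    f_equal. field. split; [lra|].
    replace (1 - d * u + d * u) with 1 by ring. lra.
Qed.

Definition ev (L : list (R * R)) (u : R) : R :=
  fold_right (fun p acc => fst p * (u / (1 - snd p * u)) + acc) 0 L.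

Lemma ev_app L1 L2 u : ev (L1 ++ L2) u = ev L1 u + ev L2 u.
Proof. induction L1 as [|p L IH]; simpl; [ring|]. rewrite IH. ring. Qed.

Definition scl (k : R) (L : list (R * R)) := map (fun p => (k * fst p, snd p)) L.

Lemma ev_scl k L u : ev (scl k L) u = k * ev L u.
Proof. induction L as [|p L IH]; simpl; [ring|]. rewrite IH. ring. Qed.

Definition divc (c : R) (L : list (R * R)) :=
  flat_map (fun p => (fst p * c / (c - snd p), c) :: (- fst p * snd p / (c - snd p), snd p) :: nil) L.

Lemma ev_divc c L u : 1 - c * u <> 0 ->
  List.Forall (fun p => snd p <> c /\ 1 - snd p * u <> 0) L ->
  ev (divc c L) u = ev L u / (1 - c * u).
Proof.
  intros Hc HL. induction HL as [|p L' Hp HL IH]; simpl.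
  - unfold Rdiv; ring.
  - destruct Hp as [H1 H2]. rewrite IH. field. split; auto. split; auto.
    intro E. apply H1. lra.
Qed.

Lemma span_shear N L x :
  List.Forall (fun p => forall i, (i < N)%nat -> snd p * snd (x i) < 1) L ->
  Reach N x (fun i => (fst (x i) + ev L (snd (x i)), snd (x i))).
Proof.
  revert x. induction L as [|[a d] L IH]; intros x HF.
  - eapply Reach_ext; [| |apply Reach_refl]; auto.
    intros i Hi; simpl. destruct (x i); simpl; f_equal; ring.
  - inversion HF as [|? ? Hp HL]; subst. simpl in Hp.
    eapply Reach_trans; [apply (term_shear N x a d Hp)|].
    eapply Reach_ext; [| |apply IH]; [reflexivity| |exact HL].
    intros i Hi; simpl. f_equal. ring.
Qed.

Lemma span_shear2 N L x :
  List.Forall (fun p => forall i, (i < N)%nat -> snd p * fst (x i) < 1) L ->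
  Reach N x (fun i => (fst (x i), snd (x i) + ev L (fst (x i)))).
Proof.
  intros HF.
  pose proof (Reach_swap _ _ _ (span_shear N L (fun i => swp (x i)) HF)) as H.
  eapply Reach_ext; [| |exact H]; intros i Hi; unfold swp; simpl; destruct (x i); reflexivity.
Qed.

Definition dd (delta : R) (j : nat) := delta / (INR j + 1).
Definition good (delta w : R) := forall j, dd delta j * w < 1.

Lemma dd_inj delta j k : 0 < delta -> dd delta j = dd delta k -> j = k.
Proof.
  intros Hd E. unfold dd in E. apply INR_eq.
  pose proof (pos_INR j). pose proof (pos_INR k).
  assert (E2 : INR j + 1 = INR k + 1).
  { apply (f_equal Rinv) in E. rewrite !Rinv_div in E.
    apply (Rmult_eq_reg_r (/ delta)). { unfold Rdiv in E. exact E. }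
    apply Rinv_neq_0_compat; lra. }
  lra.
Qed.

Lemma dd_pos delta j : 0 < delta -> 0 < dd delta j.
Proof. intros. unfold dd. apply Rdiv_lt_0_compat; auto. pose proof (pos_INR j); lra. Qed.

Lemma dd_le delta j : 0 < delta -> dd delta j <= delta.
Proof.
  intros. unfold dd. pose proof (pos_INR j).
  apply (Rmult_le_reg_r (INR j + 1)); [lra|]. unfold Rdiv.
  rewrite Rmult_assoc, Rinv_l by lra. nra.
Qed.

Lemma good_of delta w : 0 < delta -> delta * Rabs w < 1 -> good delta w.
Proof.
  intros Hd H j. pose proof (dd_pos delta j Hd). pose proof (dd_le delta j Hd).
  pose proof (Rle_abs w). pose proof (Rabs_pos w).
  apply Rle_lt_trans with (dd delta j * Rabs w); [nra|].
  apply Rle_lt_trans with (delta * Rabs w); [nra|lra].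
Qed.

Lemma Ffam delta (u : nat -> R) : 0 < delta -> forall k, exists L,
  List.Forall (fun p => exists j, (j <= k)%nat /\ snd p = dd delta j) L /\
  forall w, good delta w ->
    (ev L w = 0 <-> (w = 0 \/ exists j, (j < k)%nat /\ w = u j)).
Proof.
  intros Hd. induction k as [|k IH].
  - exists ((1, dd delta 0) :: nil). split.
    + constructor; [|constructor]. exists 0%nat; simpl; auto.
    + intros w Hw. simpl. specialize (Hw 0%nat). split.
      * intros E. left. replace (1 * (w / (1 - dd delta 0 * w)) + 0) with (w / (1 - dd delta 0 * w)) in E by ring.
        unfold Rdiv in E. apply Rmult_integral in E. destruct E as [E|E]; auto.
        exfalso. revert E. apply Rinv_neq_0_compat. lra.
      * intros [E|(j & Hj & _)]; [subst; unfold Rdiv; ring|lia].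
  - destruct IH as (L & HL & HZ).
    set (c := dd delta (S k)).
    assert (Hc : 0 < c) by apply dd_pos, Hd.
    exists (scl (-1 / c) L ++ scl (1 / c - u k) (divc c L)). split.
    + apply Forall_app. split.
      * apply Forall_map. eapply Forall_impl; [|exact HL].
        intros p (j & Hj & E). exists j. split; [lia|exact E].
      * apply Forall_map. unfold divc. apply Forall_flat_map.
        eapply Forall_impl; [|exact HL].
        intros p (j & Hj & E). repeat constructor.
        -- exists (S k). split; auto.
        -- exists j. split; [lia|exact E].
    + intros w Hw.
      assert (Hcw : 1 - c * w <> 0) by (specialize (Hw (S k)); fold c in Hw; lra).
      assert (Hev : ev (scl (-1 / c) L ++ scl (1 / c - u k) (divc c L)) w
                    = ev L w * ((w - u k) / (1 - c * w))).
      { rewrite ev_app, !ev_scl, ev_divc; auto.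
        - field. split; lra.
        - eapply Forall_impl; [|exact HL]. intros p (j & Hj & E). rewrite E. split.
          + intro E2. apply dd_inj in E2; [lia|auto].
          + specialize (Hw j). lra. }
      rewrite Hev. specialize (HZ w Hw). split.
      * intros E. apply Rmult_integral in E. destruct E as [E|E].
        -- apply HZ in E. destruct E as [E|(j & Hj & E)]; [auto|right; exists j; split; [lia|auto]].
        -- right. exists k. split; [lia|]. unfold Rdiv in E. apply Rmult_integral in E.
           destruct E as [E|E]; [lra|]. exfalso; revert E; apply Rinv_neq_0_compat; auto.
      * intros [E|(j & Hj & E)].
        -- assert (ev L w = 0) as ->. { apply HZ; auto. } ring.
        -- destruct (Nat.eq_dec j k) as [->|Hjk].
           ++ rewrite E. unfold Rdiv. ring.
           ++ assert (ev L w = 0) as ->. { apply HZ. right. exists j. split; [lia|auto]. } ring.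
Qed.

Lemma interp_aux delta (u v : nat -> R) n : 0 < delta ->
  (forall i, (i < n)%nat -> u i <> 0) ->
  (forall i j, (i < n)%nat -> (j < n)%nat -> i <> j -> u i <> u j) ->
  (forall i, (i < n)%nat -> good delta (u i)) ->
  forall m, (m <= n)%nat -> exists L,
    List.Forall (fun p => exists j, snd p = dd delta j) L /\
    forall i, (i < m)%nat -> ev L (u i) = v i.
Proof.
  intros Hd Hnz Hdis Hg. induction m as [|m IH]; intros Hm.
  - exists nil. split; [constructor|intros; lia].
  - destruct IH as (L & HL & HE); [lia|].
    destruct (Ffam delta u Hd m) as (F & HF & HZ).
    set (f := ev F (u m)).
    assert (Hf : f <> 0).
    { unfold f. intro E. apply (HZ (u m) (Hg m ltac:(lia))) in E.
      destruct E as [E|(j & Hj & E)].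
      - apply (Hnz m); auto; lia.
      - apply (Hdis m j); try lia; auto. }
    set (lam := (v m - ev L (u m)) / f).
    exists (L ++ scl lam F). split.
    + apply Forall_app. split; auto. apply Forall_map.
      eapply Forall_impl; [|exact HF]. intros p (j & _ & E). exists j; exact E.
    + intros i Hi. rewrite ev_app, ev_scl.
      destruct (Nat.eq_dec i m) as [->|Him].
      * fold f. unfold lam. field. exact Hf.
      * rewrite HE by lia.
        assert (ev F (u i) = 0) as ->.
        { apply HZ; [apply Hg; lia|]. right. exists i. split; [lia|auto]. }
        ring.
Qed.

Lemma bound_exists (u : nat -> R) n : exists M, 0 <= M /\ forall i, (i < n)%nat -> Rabs (u i) <= M.
Proof.
  induction n as [|n (M & HM & H)].
  - exists 0. split; [lra|intros; lia].
  - exists (Rmax M (Rabs (u n))). split.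
    + apply Rle_trans with M; [lra|apply Rmax_l].
    + intros i Hi. destruct (Nat.eq_dec i n) as [->|Hin].
      * apply Rmax_r.
      * apply Rle_trans with M; [apply H; lia|apply Rmax_l].
Qed.

Lemma interp (u v : nat -> R) n :
  (forall i, (i < n)%nat -> u i <> 0) ->
  (forall i j, (i < n)%nat -> (j < n)%nat -> i <> j -> u i <> u j) ->
  exists L, List.Forall (fun p => forall i, (i < n)%nat -> snd p * u i < 1) L /\
    forall i, (i < n)%nat -> ev L (u i) = v i.
Proof.
  intros Hnz Hdis.
  destruct (bound_exists u n) as (M & HM & HB).
  set (delta := 1 / (M + 1)).
  assert (Hd : 0 < delta) by (unfold delta; apply Rdiv_lt_0_compat; lra).
  assert (Hg : forall i, (i < n)%nat -> good delta (u i)).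
  { intros i Hi. apply good_of; auto. specialize (HB i Hi).
    unfold delta. apply (Rmult_lt_reg_r (M + 1)); [lra|].
    replace (1 / (M + 1) * Rabs (u i) * (M + 1)) with (Rabs (u i)) by (field; lra). lra. }
  destruct (interp_aux delta u v n Hd Hnz Hdis Hg n (le_n n)) as (L & HL & HE).
  exists L. split; auto.
  eapply Forall_impl; [|exact HL]. intros p (j & E) i Hi. rewrite E. apply (Hg i Hi).
Qed.

Lemma avoidB (bad : nat -> R -> Prop) :
  (forall k, exists B, forall b, B < b -> ~ bad k b) ->
  forall n, exists B, forall b, B < b -> forall k, (k < n)%nat -> ~ bad k b.
Proof.
  intros H n. induction n as [|n (B1 & H1)].
  - exists 0. intros; lia.
  - destruct (H n) as (B2 & H2). exists (Rmax B1 B2). intros b Hb k Hk.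
    pose proof (Rmax_l B1 B2). pose proof (Rmax_r B1 B2).
    destruct (Nat.eq_dec k n) as [->|Hkn].
    + apply H2; lra.
    + apply H1; [lra|lia].
Qed.

Lemma lin_avoid a b0 : ~ (a = 0 /\ b0 = 0) -> exists B, forall b, B < b -> a + b * b0 <> 0.
Proof.
  intros H. destruct (Req_dec b0 0) as [->|Hb].
  - exists 0. intros b _. replace (a + b * 0) with a by ring. intro; apply H; auto.
  - exists (- a / b0). intros b Hlt E. assert (b = - a / b0) by (field_simplify_eq; [lra|auto]). lra.
Qed.

Lemma generic2 N (x : nat -> R * R) :
  (forall i j, (i < N)%nat -> (j < N)%nat -> i <> j -> x i <> x j) ->
  (forall i, (i < N)%nat -> x i <> (0, 0)) ->
  exists b, (forall i, (i < N)%nat -> snd (x i) + b * fst (x i) <> 0) /\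
    (forall i j, (i < N)%nat -> (j < N)%nat -> i <> j ->
       snd (x i) + b * fst (x i) <> snd (x j) + b * fst (x j)).
Proof.
  intros Hd Hz.
  destruct (avoidB (fun k b => (k < N)%nat /\ snd (x k) + b * fst (x k) = 0)) with (n := N)
    as (B1 & H1).
  { intros k. destruct (Nat.lt_ge_cases k N) as [Hk|Hk].
    - destruct (lin_avoid (snd (x k)) (fst (x k))) as (B & HB).
      + intros [E1 E2]. apply (Hz k Hk). destruct (x k); simpl in *; subst; auto.
      + exists B. intros b Hb [_ E]. apply (HB b Hb E).
    - exists 0. intros b _ [Hk' _]. lia. }
  destruct (avoidB (fun i b => exists j, (j < N)%nat /\ ((i < N)%nat /\ i <> j /\
      snd (x i) + b * fst (x i) = snd (x j) + b * fst (x j)))) with (n := N) as (B2 & H2).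
  { intros i.
    destruct (avoidB (fun j b => (i < N)%nat /\ (j < N)%nat /\ i <> j /\
      snd (x i) + b * fst (x i) = snd (x j) + b * fst (x j))) with (n := N) as (B & HB).
    - intros j. destruct (Nat.lt_ge_cases i N) as [Hi|Hi]; [|exists 0; intros b _ (? & _); lia].
      destruct (Nat.lt_ge_cases j N) as [Hj|Hj]; [|exists 0; intros b _ (_ & ? & _); lia].
      destruct (Nat.eq_dec i j) as [Hij|Hij]; [exists 0; intros b _ (_ & _ & ? & _); auto|].
      destruct (lin_avoid (snd (x i) - snd (x j)) (fst (x i) - fst (x j))) as (B & HB).
      + intros [E1 E2]. apply (Hd i j Hi Hj Hij).
        destruct (x i), (x j); simpl in *. f_equal; lra.
      + exists B. intros b Hb (_ & _ & _ & E). apply (HB b Hb). lra.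
    - exists B. intros b Hb (j & Hj & Hrest). apply (HB b Hb j Hj). tauto. }
  exists (Rmax B1 B2 + 1).
  pose proof (Rmax_l B1 B2). pose proof (Rmax_r B1 B2).
  split.
  - intros i Hi E. apply (H1 (Rmax B1 B2 + 1) ltac:(lra) i Hi). auto.
  - intros i j Hi Hj Hij E. apply (H2 (Rmax B1 B2 + 1) ltac:(lra) i Hi).
    exists j. auto.
Qed.

Theorem lemma3p16 (N : nat) (x y : nat -> R * R) :
  (0 < N)%nat ->
  (forall i j, (i < N)%nat -> (j < N)%nat -> i <> j -> x i <> x j) ->
  (forall i j, (i < N)%nat -> (j < N)%nat -> i <> j -> y i <> y j) ->
  (forall i, (i < N)%nat -> x i <> (0, 0)) ->
  (forall i, (i < N)%nat -> y i <> (0, 0)) ->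
  exists steps : list (control * R),
    List.Forall (fun st => 0 <= snd st) steps /\
    forall i, (i < N)%nat -> flow_comp steps (x i) (y i).
Proof.
  intros _ Hdx Hdy Hzx Hzy.
  destruct (generic2 N x Hdx Hzx) as (b & Hbz & Hbd).
  destruct (generic2 N (fun i => swp (y i))) as (a & Haz & Had).
  { intros i j Hi Hj Hij E. apply (Hdy i j Hi Hj Hij).
    unfold swp in E. destruct (y i), (y j); simpl in *. inversion E; subst; auto. }
  { intros i Hi E. apply (Hzy i Hi). unfold swp in E. destruct (y i); simpl in *.
    inversion E; subst; auto. }
  unfold swp in Haz, Had; simpl in Haz, Had.
  set (u := fun i => snd (x i) + b * fst (x i)).
  set (w := fun i => fst (y i) + a * snd (y i)).
  destruct (interp u (fun i => w i - fst (x i)) N Hbz Hbd) as (L1 & HL1 & HE1).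
  destruct (interp w (fun i => snd (y i) - u i) N Haz Had) as (L2 & HL2 & HE2).
  assert (R1 : Reach N x (fun i => (fst (x i), u i))) by apply shear2.
  assert (R2 : Reach N (fun i => (fst (x i), u i)) (fun i => (w i, u i))).
  { eapply Reach_ext; [| |apply (span_shear N L1)]; [reflexivity| |exact HL1].
    intros i Hi; simpl. rewrite HE1 by auto. f_equal; ring. }
  assert (R3 : Reach N (fun i => (w i, u i)) (fun i => (w i, snd (y i)))).
  { eapply Reach_ext; [| |apply (span_shear2 N L2)]; [reflexivity| |exact HL2].
    intros i Hi; simpl. rewrite HE2 by auto. f_equal; ring. }
  assert (R4 : Reach N (fun i => (w i, snd (y i))) y).
  { eapply Reach_ext; [| |apply (shear1 N _ (- a))]; [reflexivity| ].
    intros i Hi; simpl. unfold w. destruct (y i); simpl. f_equal; ring. }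
  exact (Reach_trans _ _ _ _ (Reach_trans _ _ _ _ R1 R2) (Reach_trans _ _ _ _ R3 R4)).
Qed.
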